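(* Under the utility optimization algorithm described in the context, let $r_a^b(\tau)=\frac1\tau\sum_{t=0}^{\tau-1}R_a^b(t)$. Then $$\liminf_{\tau\to\infty}\sum_{a,b\in\mathcal{N}}U_a^b\big(r_a^b(\tau)\big)\;\ge\;U_{tot}(\vec r^{\,*})-\frac{\tilde B}{V},$$ where $U_{tot}(\vec r^{\,*})=\sum_{a,b}U_a^b(r_a^{b*})$ is the optimal network utility achievable by any control policy satisfying the key and queue dynamics, the key availability constraint and network stability, and $\tilde B=B+N^2\gamma d_{max}\mu_{max}$ with $B=N^2\big(\tfrac32d_{max}^2\mu_{max}^2+R_{max}^2\big)+\tfrac L2(P_{max}+K_{max})^2$.
   Context: Network: a graph $G=(\mathcal{N},\mathcal{L})$ with $N=|\mathcal{N}|$ nodes and $L=|\mathcal{L}|$ directed links $l_{[a,c]}$; $\mathcal{N}_a^{in}$ ($\mathcal{N}_a^{out}$) is the set of nodes with a link into (out of) $a$; $d_{max}=\max_a\max(|\mathcal{N}_a^{in}|,|\mathcal{N}_a^{out}|)$. Time is slotted. Per link: key generated per slot $K_{[a,c]}\le K_{max}$ when $S_{[a,c]}(t)=1$; key consumed $P_{[a,c]}(t)\in[0,P_{max}]$; stored key $E_{[a,c]}(t+1)=E_{[a,c]}(t)-P_{[a,c]}(t)+S_{[a,c]}(t)K_{[a,c]}$, $E(0)=0$, constraint $E_{[a,c]}(t)\ge P_{[a,c]}(t)$; rate $\mu_{[a,c]}(t)=\mu_{[a,c]}(P_{[a,c]}(t))\le\mu_{max}$, $\mu_{[a,c]}(P)\le\delta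 P$ for a constant $\delta>0$, split as $\sum_b\mu^b_{[a,c]}(t)$ over types (type-$b$ = destined to $b$). Queues: $Q_a^b(t+1)=Q_a^b(t)+R_a^b(t)+\sum_{c\in\mathcal{N}_a^{in}}\mu^b_{[c,a]}(t)-\sum_{c\in\mathcal{N}_a^{out}}\mu^b_{[a,c]}(t)$, $Q(0)=0$, admitted data $R_a^b(t)\in[0,R_{max}]$. Stability means $\limsup_{t\to\infty}\frac1t\sum_{\tau<t}\sum_{a,b}Q_a^b(\tau)<\infty$. Utilities $U_a^b$ concave nondecreasing, $\beta=\max_{a,b}(U_a^b)'(0)$. Parameters: $V>0$, $\gamma=R_{max}+d_{max}\mu_{max}$, $\theta_{[a,c]}=\delta\beta V+P_{max}$. Weights $W^b_{[a,c]}(t)=\max(Q_a^b(t)-Q_c^b(t)-\gamma,0)$, $W_{[a,c]}(t)=\max_bW^b_{[a,c]}(t)$. Algorithm, each slot $t$: (1) $S_{[a,c]}(t)=1$ iff $E_{[a,c]}(t)<\theta_{[a,c]}$; (2) $R_a^b(t)\in[0,R_{max}]$ maximizes $VU_a^b(R)-Q_a^b(t)R$; (3) $\vec P(t)$ maximizes $\sum_{l_{[a,c]}}\{\mu_{[a,c]}(P_{[a,c]})W_{[a,c]}(t)+(E_{[a,c]}(t)-\theta_{[a,c]})P_{[a,c]}\}$ subject to $E_{[a,c]}(t)\ge P_{[a,c]}$; (4) for $b^*\in\arg\max_bW^b_{[a,c]}(t)$, if $W^{b^*}_{[a,c]}(t)>0$ set $\mu^{b^*}_{[a,c]}(t)=\mu_{[a,c]}(t)$,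 others zero; (5) update by the dynamics. *)

(* Defs.v *)
From Stdlib Require Import Reals Lra List Arith.
Import ListNotations.
Open Scope R_scope.

Definition sumR {A : Type} (l : list A) (f : A -> R) : R :=
  fold_right (fun x acc => f x + acc) 0 l.

(* Data of the network and of the model.  Nodes are 0 .. nN-1; a directed
   link l_[a,c] is the pair (a,c). *)
Record Net := mkNet {
  nN    : nat;
  links : list (nat * nat);
  Kgen  : nat * nat -> R;
  Kmax  : R;
  Pmax  : R;
  mu    : nat * nat -> R -> R;
  mumax : R;
  delta : R;
  R_max : R;
  U     : nat -> nat -> R -> R
}.

Definition nodes (n : Net) : list nat := seq 0 (nN n).
Definition Lnum (n : Net) : nat := length (links n).

Definition indeg (n : Net) (a : nat) : nat :=
  length (filter (fun l => Nat.eqb (snd l) a) (links n)).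
Definition outdeg (n : Net) (a : nat) : nat :=
  length (filter (fun l => Nat.eqb (fst l) a) (links n)).
Definition dmax (n : Net) : nat :=
  fold_right Nat.max 0%nat (map (fun a => Nat.max (indeg n a) (outdeg n a)) (nodes n)).

Definition concave_on_nonneg (f : R -> R) : Prop :=
  forall x y lam, 0 <= x -> 0 <= y -> 0 <= lam <= 1 ->
    lam * f x + (1 - lam) * f y <= f (lam * x + (1 - lam) * y).
Definition nondecr_on_nonneg (f : R -> R) : Prop :=
  forall x y, 0 <= x -> x <= y -> f x <= f y.

Definition right_deriv (f : R -> R) (x d : R) : Prop :=
  forall eps, 0 < eps -> exists del, 0 < del /\
    forall h, 0 < h < del -> Rabs ((f (x + h) - f x) / h - d) < eps.

Definition valid_net (n : Net) : Prop :=
  NoDup (links n) /\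
  (forall a c, In (a, c) (links n) -> (a < nN n)%nat /\ (c < nN n)%nat /\ a <> c) /\
  0 <= Kmax n /\ 0 <= Pmax n /\ 0 <= mumax n /\ 0 < delta n /\ 0 <= R_max n /\
  (forall l, In l (links n) -> 0 <= Kgen n l <= Kmax n) /\
  (forall l P, In l (links n) -> 0 <= P <= Pmax n ->
     0 <= mu n l P /\ mu n l P <= mumax n /\ mu n l P <= delta n * P) /\
  (forall a b, (a < nN n)%nat -> (b < nN n)%nat ->
     concave_on_nonneg (U n a b) /\ nondecr_on_nonneg (U n a b)).

Definition is_beta (n : Net) (beta : R) : Prop :=
  (forall a b, (a < nN n)%nat -> (b < nN n)%nat ->
     exists d, right_deriv (U n a b) 0 d /\ d <= beta) /\
  (exists a b, (a < nN n)%nat /\ (b < nN n)%nat /\ right_deriv (U n a b) 0 beta).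

Record Traj := mkTraj {
  E   : nat * nat -> nat -> R;
  Sk  : nat * nat -> nat -> R;
  P   : nat * nat -> nat -> R;
  mub : nat * nat -> nat -> nat -> R;   (* mu^b_l(t) : link, type b, time *)
  Q   : nat -> nat -> nat -> R;
  Radm : nat -> nat -> nat -> R
}.

Definition inflow (n : Net) (tr : Traj) (a b t : nat) : R :=
  sumR (filter (fun l => Nat.eqb (snd l) a) (links n)) (fun l => mub tr l b t).
Definition outflow (n : Net) (tr : Traj) (a b t : nat) : R :=
  sumR (filter (fun l => Nat.eqb (fst l) a) (links n)) (fun l => mub tr l b t).

Definition key_dynamics (n : Net) (tr : Traj) : Prop :=
  forall l, In l (links n) ->
    E tr l 0 = 0 /\
    forall t, E tr l (S t) = E tr l t - P tr l t + Sk tr l t * Kgen n l.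

(* Queue dynamics; by convention the queue of type-b data at its destination b
   is identically zero (delivered data leaves the network). *)
Definition queue_dynamics (n : Net) (tr : Traj) : Prop :=
  forall a b, (a < nN n)%nat -> (b < nN n)%nat ->
    Q tr a b 0 = 0 /\
    forall t,
      (a = b -> Q tr a b t = 0) /\
      (a <> b -> Q tr a b (S t) =
         Q tr a b t + Radm tr a b t + inflow n tr a b t - outflow n tr a b t).

Definition total_queue (n : Net) (tr : Traj) (t : nat) : R :=
  sumR (nodes n) (fun a => sumR (nodes n) (fun b => Q tr a b t)).

(* limsup_{t->oo} (1/t) sum_{tau<t} sum_{a,b} Q_a^b(tau) < oo *)
Definition stable (n : Net) (tr : Traj) : Prop :=
  exists M T, forall t, (T <= t)%nat -> (0 < t)%nat ->
    / INR t * sumR (seq 0 t) (fun tau => total_queue n tr tau) <= M.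

Definition feasible_policy (n : Net) (tr : Traj) : Prop :=
  key_dynamics n tr /\ queue_dynamics n tr /\
  (forall l t, In l (links n) ->
     (Sk tr l t = 0 \/ Sk tr l t = 1) /\
     0 <= P tr l t <= Pmax n /\
     P tr l t <= E tr l t /\
     (forall b, (b < nN n)%nat -> 0 <= mub tr l b t) /\
     sumR (nodes n) (fun b => mub tr l b t) = mu n l (P tr l t)) /\
  (forall a b t, (a < nN n)%nat -> (b < nN n)%nat ->
     0 <= Radm tr a b t <= R_max n /\ 0 <= Q tr a b t) /\
  stable n tr.

Definition gamma (n : Net) : R := R_max n + INR (dmax n) * mumax n.
Definition theta (n : Net) (beta V : R) : R := delta n * beta * V + Pmax n.

Definition Wb (n : Net) (tr : Traj) (l : nat * nat) (b t : nat) : R :=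
  Rmax (Q tr (fst l) b t - Q tr (snd l) b t - gamma n) 0.
Definition Wl (n : Net) (tr : Traj) (l : nat * nat) (t : nat) : R :=
  fold_right Rmax 0 (map (fun b => Wb n tr l b t) (nodes n)).

Definition P_admissible (n : Net) (tr : Traj) (t : nat) (Pv : nat * nat -> R) : Prop :=
  forall l, In l (links n) -> 0 <= Pv l <= Pmax n /\ Pv l <= E tr l t.

Definition P_objective (n : Net) (tr : Traj) (beta V : R) (t : nat)
  (Pv : nat * nat -> R) : R :=
  sumR (links n) (fun l =>
    mu n l (Pv l) * Wl n tr l t + (E tr l t - theta n beta V) * Pv l).

Definition follows_algorithm (n : Net) (beta V : R) (tr : Traj) : Prop :=
  key_dynamics n tr /\ queue_dynamics n tr /\
  forall t,
    (* (1) key generation *)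
    (forall l, In l (links n) ->
       (E tr l t < theta n beta V -> Sk tr l t = 1) /\
       (theta n beta V <= E tr l t -> Sk tr l t = 0)) /\
    (* (2) admission control *)
    (forall a b, (a < nN n)%nat -> (b < nN n)%nat ->
       0 <= Radm tr a b t <= R_max n /\
       forall R', 0 <= R' <= R_max n ->
         V * U n a b R' - Q tr a b t * R' <=
         V * U n a b (Radm tr a b t) - Q tr a b t * Radm tr a b t) /\
    (* (3) key consumption / power allocation *)
    (P_admissible n tr t (fun l => P tr l t) /\
     forall Pv, P_admissible n tr t Pv ->
       P_objective n tr beta V t Pv <= P_objective n tr beta V t (fun l => P tr l t)) /\
    (* (4) routing *)
    (forall l, In l (links n) ->
       exists bs, (bs < nN n)%nat /\
         (forall b, (b < nN n)%nat -> Wb n tr l b t <= Wb n tr l bs t) /\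
         (0 < Wb n tr l bs t ->
            mub tr l bs t = mu n l (P tr l t) /\
            forall b, (b < nN n)%nat -> b <> bs -> mub tr l b t = 0) /\
         (Wb n tr l bs t <= 0 -> forall b, (b < nN n)%nat -> mub tr l b t = 0)).

Definition avg_rate (tr : Traj) (a b tau : nat) : R :=
  / INR tau * sumR (seq 0 tau) (fun t => Radm tr a b t).

Definition total_utility (n : Net) (r : nat -> nat -> R) : R :=
  sumR (nodes n) (fun a => sumR (nodes n) (fun b => U n a b (r a b))).

Definition Bconst (n : Net) : R :=
  INR (nN n) ^ 2 * (3 / 2 * INR (dmax n) ^ 2 * mumax n ^ 2 + R_max n ^ 2)
  + INR (Lnum n) / 2 * (Pmax n + Kmax n) ^ 2.
Definition Btilde (n : Net) : R :=
  Bconst n + INR (nN n) ^ 2 * gamma n * INR (dmax n) * mumax n.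

(* Main.v *)
Require Import Defs.
From Stdlib Require Import Reals List Arith.
From Stdlib Require Import Lra Lia Psatz Classical.
Import ListNotations.
Open Scope R_scope.


Lemma sumR_cons {A} (x:A) l f : sumR (x::l) f = f x + sumR l f.
Proof. reflexivity. Qed.
Lemma sumR_nil {A} (f:A->R) : sumR [] f = 0.
Proof. reflexivity. Qed.
Lemma sumR_app {A} (l1 l2 : list A) f : sumR (l1++l2) f = sumR l1 f + sumR l2 f.
Proof. induction l1; simpl; rewrite ?sumR_nil, ?sumR_cons; [lra|]. rewrite IHl1; lra. Qed.
Lemma sumR_ext {A} (l : list A) f g : (forall x, In x l -> f x = g x) -> sumR l f = sumR l g.
Proof. induction l; intros H; rewrite ?sumR_nil, ?sumR_cons; [lra|].
 rewrite H by (left; auto). rewrite IHl; [lra|]. intros; apply H; right; auto. Qed.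
Lemma sumR_le {A} (l : list A) f g : (forall x, In x l -> f x <= g x) -> sumR l f <= sumR l g.
Proof. induction l; intros H; rewrite ?sumR_nil, ?sumR_cons; [lra|].
 assert (f a <= g a) by (apply H; left; auto).
 assert (sumR l f <= sumR l g) by (apply IHl; intros; apply H; right; auto). lra. Qed.
Lemma sumR_plus {A} (l : list A) f g : sumR l (fun x => f x + g x) = sumR l f + sumR l g.
Proof. induction l; rewrite ?sumR_nil, ?sumR_cons; [lra|]. rewrite IHl; lra. Qed.
Lemma sumR_minus {A} (l : list A) f g : sumR l (fun x => f x - g x) = sumR l f - sumR l g.
Proof. induction l; rewrite ?sumR_nil, ?sumR_cons; [lra|]. rewrite IHl; lra. Qed.
Lemma sumR_scal {A} (l : list A) c f : sumR l (fun x => c * f x) = c * sumR l f.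
Proof. induction l; rewrite ?sumR_nil, ?sumR_cons; [lra|]. rewrite IHl; lra. Qed.
Lemma sumR_const {A} (l : list A) c : sumR l (fun _ => c) = INR (length l) * c.
Proof. induction l; rewrite ?sumR_nil, ?sumR_cons; simpl length; [simpl; lra|].
 rewrite IHl, S_INR; lra. Qed.
Lemma sumR_swap {A B} (l1 : list A) (l2 : list B) f :
  sumR l1 (fun x => sumR l2 (fun y => f x y)) = sumR l2 (fun y => sumR l1 (fun x => f x y)).
Proof. induction l1; rewrite ?sumR_nil, ?sumR_cons.
 - induction l2; rewrite ?sumR_nil, ?sumR_cons; [lra|]. rewrite <- IHl2; rewrite sumR_nil; lra.
 - rewrite IHl1. rewrite <- sumR_plus. apply sumR_ext; intros; rewrite sumR_cons; lra. Qed.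
Lemma sumR_nonneg {A} (l : list A) f : (forall x, In x l -> 0 <= f x) -> 0 <= sumR l f.
Proof. intros H. replace 0 with (sumR l (fun _ => 0)).
 apply sumR_le; auto. rewrite sumR_const; lra. Qed.
Lemma sumR_seqS f t : sumR (seq 0 (S t)) f = sumR (seq 0 t) f + f t.
Proof. rewrite seq_S, sumR_app, sumR_cons, sumR_nil. simpl. lra. Qed.
Lemma sumR_single (l : list nat) (k : nat) c :
  NoDup l -> In k l -> sumR l (fun a => if Nat.eqb k a then c else 0) = c.
Proof. induction l; intros Hd Hi; [destruct Hi|]. inversion Hd; subst. rewrite sumR_cons.
 destruct (Nat.eqb k a) eqn:E1.
 - apply Nat.eqb_eq in E1; subst. rewrite (sumR_ext _ _ (fun _ => 0)). rewrite sumR_const; lra.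
   intros x Hx. destruct (Nat.eqb a x) eqn:E2; auto. apply Nat.eqb_eq in E2; subst; contradiction.
 - destruct Hi as [Hi|Hi]. subst. rewrite Nat.eqb_refl in E1; discriminate.
   rewrite IHl; auto; lra. Qed.
Lemma sumR_partition (key : nat*nat -> nat) (ls : list (nat*nat)) (ns : list nat) g :
  NoDup ns -> (forall l, In l ls -> In (key l) ns) ->
  sumR ns (fun a => sumR (filter (fun l => Nat.eqb (key l) a) ls) g) = sumR ls g.
Proof. intros Hd. induction ls; intros Hk.
 - simpl. rewrite sumR_const; lra.
 - rewrite sumR_cons. rewrite <- IHls by (intros; apply Hk; right; auto).
   rewrite (sumR_ext _ _ (fun x => (if Nat.eqb (key a) x then g a else 0) +
       sumR (filter (fun l => Nat.eqb (key l) x) ls) g)).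
   rewrite sumR_plus, sumR_single; auto. apply Hk; left; auto.
   intros x _. simpl. destruct (Nat.eqb (key a) x); rewrite ?sumR_cons; lra. Qed.
Lemma le_fold_max {A} (f : A -> nat) l x : In x l -> (f x <= fold_right Nat.max 0 (map f l))%nat.
Proof. induction l; simpl; [intros []|]. intros [H|H]; subst; try lia. specialize (IHl H); lia. Qed.
Lemma sumR_bound {A} (l : list A) f c : (forall x, In x l -> f x <= c) -> sumR l f <= INR (length l) * c.
Proof. intros; rewrite <- sumR_const; apply sumR_le; auto. Qed.

Lemma Rdiv_le_0_compat a b : 0 <= a -> 0 < b -> 0 <= a / b.
Proof. intros; unfold Rdiv; apply Rmult_le_pos; [|left; apply Rinv_0_lt_compat]; lra. Qed.

Lemma jensen f x m : concave_on_nonneg f -> (forall s, 0 <= x s) -> (0 < m)%nat ->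
  / INR m * sumR (seq 0 m) (fun s => f (x s)) <= f (/ INR m * sumR (seq 0 m) x).
Proof.
  intros Hc Hx Hm. induction m as [|m IH]; [lia|]. destruct m as [|m].
  - unfold sumR; simpl. replace (/1 * (f (x 0%nat) + 0)) with (f (x 0%nat)) by field.
    replace (/1 * (x 0%nat + 0)) with (x 0%nat) by field. lra.
  - specialize (IH ltac:(lia)). rewrite !(sumR_seqS _ (S m)).
    set (A0 := sumR (seq 0 (S m)) x) in *. set (F := sumR (seq 0 (S m)) (fun s => f (x s))) in *.
    set (y := x (S m)).
    assert (HM : 0 < INR (S m)) by (apply lt_0_INR; lia).
    set (M := INR (S m)) in *. rewrite (S_INR (S m)). fold M.
    assert (HA : 0 <= A0) by (apply sumR_nonneg; intros; auto).
    assert (Hy : 0 <= y) by apply Hx.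
    set (lam := M / (M+1)).
    assert (Hl : 0 <= lam <= 1). { unfold lam; split. apply Rdiv_le_0_compat; lra.
      apply (Rmult_le_reg_r (M+1)); [lra|]. unfold Rdiv; rewrite Rmult_assoc, Rinv_l; lra. }
    assert (HA' : 0 <= / M * A0) by (apply Rmult_le_pos; [left; apply Rinv_0_lt_compat|]; lra).
    pose proof (Hc (/ M * A0) y lam HA' Hy Hl) as Hcc.
    replace (lam * (/ M * A0) + (1 - lam) * y) with (/ (M + 1) * (A0 + y)) in Hcc
      by (unfold lam; field; lra).
    replace (/ (M + 1) * (F + f y)) with (lam * (/ M * F) + (1 - lam) * f y) by (unfold lam; field; lra).
    assert (lam * (/ M * F) <= lam * f (/ M * A0)) by (apply Rmult_le_compat_l; lra).
    lra.
Qed.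

Lemma concave_deriv_bound f d R : concave_on_nonneg f -> right_deriv f 0 d -> 0 <= R ->
  f R - f 0 <= d * R.
Proof.
  intros Hc Hd HR. destruct (Req_dec R 0) as [->|HR0]; [lra|].
  assert (HRp : 0 < R) by lra.
  destruct (Rle_dec (f R - f 0) (d * R)) as [|Hn]; auto. exfalso.
  set (s := (f R - f 0) / R).
  assert (Hs : d < s). { unfold s. apply (Rmult_lt_reg_r R); auto. unfold Rdiv.
    rewrite Rmult_assoc, Rinv_l; lra. }
  destruct (Hd (s - d) ltac:(lra)) as [del [Hdel Hh]].
  set (h := Rmin (del/2) (R/2)).
  assert (Hh0 : 0 < h) by (unfold h; apply Rmin_glb_lt; lra).
  assert (Hh1 : h < del) by (unfold h; eapply Rle_lt_trans; [apply Rmin_l|lra]).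
  assert (Hh2 : h <= R/2) by (unfold h; apply Rmin_r).
  specialize (Hh h ltac:(lra)). rewrite Rplus_0_l in Hh.
  apply Rabs_def2 in Hh. destruct Hh as [Hh _].
  pose proof (Hc R 0 (h / R) ltac:(lra) ltac:(lra)) as Hcc.
  assert (Hl : 0 <= h / R <= 1). { split. apply Rdiv_le_0_compat; lra.
      apply (Rmult_le_reg_r R); [lra|]. unfold Rdiv; rewrite Rmult_assoc, Rinv_l; lra. }
  specialize (Hcc Hl). replace (h / R * R + (1 - h / R) * 0) with h in Hcc by (field; lra).
  assert (Hge : s <= (f h - f 0) / h).
  { unfold s. apply (Rmult_le_reg_r h); auto. unfold Rdiv at 2. rewrite Rmult_assoc, Rinv_l by lra.
    replace ((f R - f 0) / R * h) with (h / R * f R - h / R * f 0) by (field; lra). lra. }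
  lra.
Qed.

Lemma deriv_nonneg f d : nondecr_on_nonneg f -> right_deriv f 0 d -> 0 <= d.
Proof.
  intros Hm Hd. destruct (Rle_dec 0 d) as [|Hn]; auto. exfalso.
  destruct (Hd (- d) ltac:(lra)) as [del [Hdel Hh]].
  specialize (Hh (del/2) ltac:(lra)). rewrite Rplus_0_l in Hh.
  apply Rabs_def2 in Hh. destruct Hh as [Hh _].
  assert (0 <= (f (del/2) - f 0) / (del/2)).
  { apply Rdiv_le_0_compat; [|lra]. assert (f 0 <= f (del/2)) by (apply Hm; lra). lra. }
  lra.
Qed.

Lemma in_nodes n a : In a (nodes n) <-> (a < nN n)%nat.
Proof. unfold nodes. rewrite in_seq. lia. Qed.

Lemma nodup_nodes n : NoDup (nodes n).
Proof. apply seq_NoDup. Qed.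

Lemma indeg_le n a : (a < nN n)%nat -> (indeg n a <= dmax n)%nat.
Proof. intros H. unfold dmax.
  pose proof (le_fold_max (fun a => Nat.max (indeg n a) (outdeg n a)) (nodes n) a
     (proj2 (in_nodes n a) H)). simpl in H0. lia. Qed.
Lemma outdeg_le n a : (a < nN n)%nat -> (outdeg n a <= dmax n)%nat.
Proof. intros H. unfold dmax.
  pose proof (le_fold_max (fun a => Nat.max (indeg n a) (outdeg n a)) (nodes n) a
     (proj2 (in_nodes n a) H)). simpl in H0. lia. Qed.

Lemma Rmax_pos_inv x : 0 < Rmax x 0 -> 0 < x.
Proof. unfold Rmax; destruct (Rle_dec x 0); lra. Qed.
Lemma Rmax_ge x : x <= Rmax x 0 /\ 0 <= Rmax x 0.
Proof. unfold Rmax; destruct (Rle_dec x 0); lra. Qed.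

Lemma beta_nonneg n beta : valid_net n -> is_beta n beta -> 0 <= beta.
Proof. intros Hn [_ [a [b [Ha [Hb Hd]]]]].
  destruct Hn as [_ [_ [_ [_ [_ [_ [_ [_ [_ HU]]]]]]]]].
  destruct (HU a b Ha Hb) as [_ Hm]. eapply deriv_nonneg; eauto. Qed.

Lemma gamma_ge n : valid_net n -> R_max n <= gamma n /\ INR (dmax n) * mumax n <= gamma n
   /\ 0 <= INR (dmax n) * mumax n.
Proof. intros Hn. destruct Hn as [_ [_ [_ [_ [Hmu [_ [HR _]]]]]]]. unfold gamma.
  assert (0 <= INR (dmax n) * mumax n) by (apply Rmult_le_pos; [apply pos_INR|lra]). lra. Qed.

Lemma alg_mub n beta V tr : valid_net n -> follows_algorithm n beta V tr ->
  forall l b t, In l (links n) -> (b < nN n)%nat ->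
   (mub tr l b t = 0 \/ (0 < Wb n tr l b t /\ mub tr l b t = mu n l (P tr l t))) /\
   0 <= mub tr l b t <= mumax n.
Proof.
  intros Hn [_ [_ Halg]] l b t Hl Hb.
  destruct (Halg t) as [_ [_ [[Hadm _] Hrout]]].
  destruct (Hadm l Hl) as [HP _].
  destruct Hn as [_ [_ [_ [_ [_ [_ [_ [_ [Hmu _]]]]]]]]].
  destruct (Hmu l (P tr l t) Hl HP) as [Hm1 [Hm2 _]].
  destruct (Hrout l Hl) as [bs [Hbs [Hmax [Hpos Hneg]]]].
  destruct (Rlt_dec 0 (Wb n tr l bs t)) as [Hw|Hw].
  - destruct (Hpos Hw) as [E1 E2]. destruct (Nat.eq_dec b bs) as [->|Hne].
    + rewrite E1. split; [right; auto|lra].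
    + rewrite (E2 b Hb Hne). split; [left; auto|lra].
  - rewrite (Hneg ltac:(lra) b Hb). split; [left; auto|lra].
Qed.

Lemma admission_zero n beta V tr : valid_net n -> is_beta n beta -> 0 < V ->
  follows_algorithm n beta V tr ->
  forall a b t, (a < nN n)%nat -> (b < nN n)%nat -> V * beta < Q tr a b t -> Radm tr a b t = 0.
Proof.
  intros Hn Hbeta HV [_ [_ Halg]] a b t Ha Hb HQ.
  destruct (Halg t) as [_ [Hadm _]]. destruct (Hadm a b Ha Hb) as [HR Hopt].
  pose proof (Hopt 0 ltac:(destruct Hn as [_ [_ [_ [_ [_ [_ [? _]]]]]]]; lra)) as H0.
  destruct Hbeta as [Hd _]. destruct (Hd a b Ha Hb) as [d [Hrd Hdb]].
  destruct Hn as [_ [_ [_ [_ [_ [_ [_ [_ [_ HU]]]]]]]]]. destruct (HU a b Ha Hb) as [Hc _].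
  pose proof (concave_deriv_bound _ _ _ Hc Hrd (proj1 HR)) as Hb1.
  set (r := Radm tr a b t) in *. set (q := Q tr a b t) in *.
  assert (d * r <= beta * r) by (apply Rmult_le_compat_r; lra).
  assert (V * (U n a b r - U n a b 0) <= V * (beta * r)) by (apply Rmult_le_compat_l; lra).
  nra.
Qed.

Lemma filter_sum_bound n (key : nat*nat -> nat) a (g : nat*nat -> R) c :
  0 <= c -> (forall l, In l (links n) -> 0 <= g l <= c) ->
  0 <= sumR (filter (fun l => Nat.eqb (key l) a) (links n)) g <=
     INR (length (filter (fun l => Nat.eqb (key l) a) (links n))) * c.
Proof. intros Hc Hg. split.
  - apply sumR_nonneg. intros x Hx. apply filter_In in Hx. apply Hg; tauto.
  - apply sumR_bound. intros x Hx. apply filter_In in Hx. apply Hg; tauto. Qed.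

Lemma filter_sum_zero (key : nat*nat -> nat) a ls (g : nat*nat -> R) :
  (forall l, In l ls -> key l = a -> g l = 0) ->
  sumR (filter (fun l => Nat.eqb (key l) a) ls) g = 0.
Proof. intros H. rewrite (sumR_ext _ _ (fun _ => 0)). rewrite sumR_const; lra.
  intros x Hx. apply filter_In in Hx. destruct Hx as [Hx He]. apply Nat.eqb_eq in He. auto. Qed.

Lemma flow_bounds n beta V tr : valid_net n -> follows_algorithm n beta V tr ->
  forall a b t, (a < nN n)%nat -> (b < nN n)%nat ->
  0 <= inflow n tr a b t <= INR (dmax n) * mumax n /\
  0 <= outflow n tr a b t <= INR (dmax n) * mumax n.
Proof.
  intros Hn Halg a b t Ha Hb.
  assert (Hmu0 : 0 <= mumax n) by (destruct Hn as [_ [_ [_ [_ [? _]]]]]; auto).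
  assert (Hg : forall l, In l (links n) -> 0 <= mub tr l b t <= mumax n)
    by (intros l Hl; exact (proj2 (alg_mub n beta V tr Hn Halg l b t Hl Hb))).
  split.
  - destruct (filter_sum_bound n snd a _ _ Hmu0 Hg) as [H1 H2]. unfold inflow. split; auto.
    eapply Rle_trans; [apply H2|]. apply Rmult_le_compat_r; auto. apply le_INR.
    apply indeg_le; auto.
  - destruct (filter_sum_bound n fst a _ _ Hmu0 Hg) as [H1 H2]. unfold outflow. split; auto.
    eapply Rle_trans; [apply H2|]. apply Rmult_le_compat_r; auto. apply le_INR.
    apply outdeg_le; auto.
Qed.

Lemma Q_bounds n beta V tr : valid_net n -> is_beta n beta -> 0 < V ->
  follows_algorithm n beta V tr ->
  forall t a b, (a < nN n)%nat -> (b < nN n)%nat -> 0 <= Q tr a b t <= V * beta + gamma n.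
Proof.
  intros Hn Hbeta HV Halg.
  pose proof (beta_nonneg n beta Hn Hbeta) as Hb0.
  pose proof (gamma_ge n Hn) as [Hg1 [Hg2 Hg3]].
  assert (HVb : 0 <= V * beta) by (apply Rmult_le_pos; lra).
  pose proof Halg as [_ [Hqd _]].
  assert (Hlk : forall l, In l (links n) -> (fst l < nN n)%nat /\ (snd l < nN n)%nat).
  { intros [c d] Hl. destruct Hn as [_ [Hv _]]. destruct (Hv c d Hl) as [? [? _]]; simpl; auto. }
  induction t as [|t IH]; intros a b Ha Hb.
  - destruct (Hqd a b Ha Hb) as [H0 _]. rewrite H0. lra.
  - destruct (Hqd a b Ha Hb) as [_ Hdyn]. destruct (Nat.eq_dec a b) as [Heq|Hne].
    { rewrite (proj1 (Hdyn (S t)) Heq). lra. }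
    rewrite (proj2 (Hdyn t) Hne).
    destruct (flow_bounds n beta V tr Hn Halg a b t Ha Hb) as [[Hi1 Hi2] [Ho1 Ho2]].
    pose proof Halg as [_ [_ Hal]]. destruct (Hal t) as [_ [Hadm _]].
    destruct (Hadm a b Ha Hb) as [[HR1 HR2] _].
    destruct (IH a b Ha Hb) as [Hq1 Hq2].
    unfold gamma in *.
    split.
    + destruct (Rle_dec (gamma n) (Q tr a b t)) as [Hge|Hlt].
      * unfold gamma in Hge. lra.
      * assert (Hout : outflow n tr a b t = 0).
        { unfold outflow. apply filter_sum_zero. intros l Hl Hf.
          destruct (proj1 (alg_mub n beta V tr Hn Halg l b t Hl Hb)) as [|[Hw _]]; auto.
          exfalso. apply Rmax_pos_inv in Hw. rewrite Hf in Hw.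
          destruct (IH (snd l) b (proj2 (Hlk l Hl)) Hb). lra. }
        lra.
    + destruct (Rle_dec (Q tr a b t) (V * beta)) as [Hle|Hgt]; [lra|].
      rewrite (admission_zero n beta V tr Hn Hbeta HV Halg a b t Ha Hb ltac:(lra)).
      assert (Hin : inflow n tr a b t = 0).
      { unfold inflow. apply filter_sum_zero. intros l Hl Hf.
        destruct (proj1 (alg_mub n beta V tr Hn Halg l b t Hl Hb)) as [|[Hw _]]; auto.
        exfalso. apply Rmax_pos_inv in Hw. rewrite Hf in Hw.
        destruct (IH (fst l) b (proj1 (Hlk l Hl)) Hb). unfold gamma in *. lra. }
      lra.
Qed.

Definition avg (m : nat) (f : nat -> R) : R := / INR m * sumR (seq 0 m) f.

Lemma avg_plus m f g : avg m (fun s => f s + g s) = avg m f + avg m g.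
Proof. unfold avg. rewrite sumR_plus. lra. Qed.
Lemma avg_minus m f g : avg m (fun s => f s - g s) = avg m f - avg m g.
Proof. unfold avg. rewrite sumR_minus. lra. Qed.
Lemma avg_scal m c f : avg m (fun s => c * f s) = c * avg m f.
Proof. unfold avg. rewrite sumR_scal. lra. Qed.
Lemma avg_const m c : (0 < m)%nat -> avg m (fun _ => c) = c.
Proof. intros H. unfold avg. rewrite sumR_const, length_seq. field.
  apply not_0_INR; lia. Qed.
Lemma avg_le m f g : (0 < m)%nat -> (forall s, (s < m)%nat -> f s <= g s) -> avg m f <= avg m g.
Proof. intros H Hf. unfold avg. apply Rmult_le_compat_l.
  left; apply Rinv_0_lt_compat, lt_0_INR; lia.
  apply sumR_le. intros x Hx. apply in_seq in Hx. apply Hf; lia. Qed.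
Lemma avg_sum {A} m (l : list A) f :
  avg m (fun s => sumR l (fun x => f x s)) = sumR l (fun x => avg m (fun s => f x s)).
Proof. unfold avg. rewrite sumR_swap, <- sumR_scal. reflexivity. Qed.

Lemma telescope (x g : nat -> R) m : x 0%nat = 0 -> (forall s, x (S s) = x s + g s) ->
  sumR (seq 0 m) g = x m.
Proof. intros H0 HS. induction m. unfold sumR; simpl; lra.
  rewrite sumR_seqS, IHm, HS. lra. Qed.

Lemma flow_part (key : nat*nat -> nat) n (q : nat -> nat -> R) (m2 : nat*nat -> nat -> R) :
  (forall l, In l (links n) -> In (key l) (nodes n)) ->
  sumR (nodes n) (fun a => sumR (nodes n) (fun b =>
     q a b * sumR (filter (fun l => Nat.eqb (key l) a) (links n)) (fun l => m2 l b))) =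
  sumR (links n) (fun l => sumR (nodes n) (fun b => m2 l b * q (key l) b)).
Proof.
  intros Hk. rewrite sumR_swap. rewrite (sumR_swap (links n)).
  apply sumR_ext. intros b _.
  rewrite <- (sumR_partition key (links n) (nodes n) (fun l => m2 l b * q (key l) b))
    by (auto; apply nodup_nodes).
  apply sumR_ext. intros a _. rewrite <- sumR_scal. apply sumR_ext.
  intros l Hl. apply filter_In in Hl. destruct Hl as [_ He]. apply Nat.eqb_eq in He.
  rewrite He. lra.
Qed.

Lemma flow_identity n (tr2 : Traj) (q : nat -> nat -> R) s : valid_net n ->
  sumR (nodes n) (fun a => sumR (nodes n) (fun b =>
      q a b * (inflow n tr2 a b s - outflow n tr2 a b s))) =
  - sumR (links n) (fun l => sumR (nodes n) (fun b =>
      mub tr2 l b s * (q (fst l) b - q (snd l) b))).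
Proof.
  intros Hn.
  assert (Hlk : forall l, In l (links n) -> In (fst l) (nodes n) /\ In (snd l) (nodes n)).
  { intros [c d] Hl. destruct Hn as [_ [Hv _]]. destruct (Hv c d Hl) as [? [? _]]; simpl;
    rewrite !in_nodes; auto. }
  transitivity (sumR (nodes n) (fun a => sumR (nodes n) (fun b =>
      q a b * inflow n tr2 a b s)) - sumR (nodes n) (fun a => sumR (nodes n) (fun b =>
      q a b * outflow n tr2 a b s))).
  { rewrite <- sumR_minus. apply sumR_ext; intros. rewrite <- sumR_minus. apply sumR_ext; intros. lra. }
  unfold inflow, outflow.
  rewrite (flow_part snd n q (fun l b => mub tr2 l b s)) by (intros; apply Hlk; auto).
  rewrite (flow_part fst n q (fun l b => mub tr2 l b s)) by (intros; apply Hlk; auto).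
  match goal with |- ?A - ?B = - ?C => enough (C = B - A) by lra end.
  rewrite <- sumR_minus. apply sumR_ext; intros.
  rewrite <- sumR_minus. apply sumR_ext; intros. lra.
Qed.

Definition Lyap n beta V tr t : R :=
  / 2 * sumR (nodes n) (fun a => sumR (nodes n) (fun b => Q tr a b t ^ 2)) +
  / 2 * sumR (links n) (fun l => (E tr l t - theta n beta V) ^ 2).

Lemma length_nodes n : length (nodes n) = nN n.
Proof. unfold nodes; apply length_seq. Qed.

Lemma drift_bound n beta V tr t : valid_net n -> is_beta n beta -> 0 < V ->
  follows_algorithm n beta V tr ->
  Lyap n beta V tr (S t) - Lyap n beta V tr t <=
  Bconst n +
  sumR (nodes n) (fun a => sumR (nodes n) (fun b =>
     Q tr a b t * (Radm tr a b t + inflow n tr a b t - outflow n tr a b t))) +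
  sumR (links n) (fun l => (E tr l t - theta n beta V) * (Sk tr l t * Kgen n l - P tr l t)).
Proof.
  intros Hn Hbeta HV Halg.
  set (c1 := R_max n ^ 2 + 3/2 * (INR (dmax n) * mumax n) ^ 2).
  set (c2 := / 2 * (Pmax n + Kmax n) ^ 2).
  assert (H1 : sumR (nodes n) (fun a => sumR (nodes n) (fun b => / 2 * Q tr a b (S t) ^ 2 - / 2 * Q tr a b t ^ 2))
     <= sumR (nodes n) (fun a => sumR (nodes n) (fun b =>
     Q tr a b t * (Radm tr a b t + inflow n tr a b t - outflow n tr a b t) + c1))).
  { apply sumR_le; intros a Ha; apply sumR_le; intros b Hb. apply in_nodes in Ha, Hb.
    pose proof Halg as [_ [Hqd Hal]]. destruct (Hqd a b Ha Hb) as [_ Hdyn].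
    assert (Hc1 : 0 <= c1) by (unfold c1; nra).
    destruct (Nat.eq_dec a b) as [Heq|Hne].
    - rewrite (proj1 (Hdyn (S t)) Heq), (proj1 (Hdyn t) Heq). lra.
    - rewrite (proj2 (Hdyn t) Hne).
      destruct (flow_bounds n beta V tr Hn Halg a b t Ha Hb) as [[Hi1 Hi2] [Ho1 Ho2]].
      destruct (Hal t) as [_ [Hadm _]]. destruct (Hadm a b Ha Hb) as [[HR1 HR2] _].
      unfold c1. set (r := Radm tr a b t) in *. set (i := inflow n tr a b t) in *.
      set (o := outflow n tr a b t) in *. set (q := Q tr a b t). set (dm := INR (dmax n) * mumax n) in *.
      assert (r * r <= R_max n * R_max n) by nra.
      assert (i * i <= dm * dm) by nra.
      assert (o * o <= dm * dm) by nra.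
      assert (r * i * 2 <= r * r + i * i) by (pose proof (pow2_ge_0 (r - i)); nra).
      assert (0 <= (r + i) * o) by nra.
      nra. }
  assert (H2 : sumR (links n) (fun l => / 2 * (E tr l (S t) - theta n beta V) ^ 2 - / 2 * (E tr l t - theta n beta V) ^ 2)
     <= sumR (links n) (fun l => (E tr l t - theta n beta V) * (Sk tr l t * Kgen n l - P tr l t) + c2)).
  { apply sumR_le; intros l Hl.
    pose proof Halg as [Hkd [_ Hal]]. destruct (Hkd l Hl) as [_ HE]. rewrite HE.
    destruct (Hal t) as [Hgen [_ [[Hadm _] _]]]. destruct (Hadm l Hl) as [[HP1 HP2] _].
    destruct Hn as [_ [_ [HK [HPm [_ [_ [_ [Hkg _]]]]]]]]. destruct (Hkg l Hl) as [Hk1 Hk2].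
    assert (HS : Sk tr l t = 0 \/ Sk tr l t = 1).
    { destruct (Hgen l Hl) as [G1 G2]. destruct (Rlt_dec (E tr l t) (theta n beta V)); [right|left]; auto.
      apply G2; lra. }
    assert (Hx : -(Pmax n + Kmax n) <= Sk tr l t * Kgen n l - P tr l t <= Pmax n + Kmax n)
      by (destruct HS as [-> | ->]; lra).
    unfold c2. set (x := Sk tr l t * Kgen n l - P tr l t) in *.
    replace (E tr l t - P tr l t + Sk tr l t * Kgen n l) with (E tr l t + x) by (unfold x; lra).
    assert (x * x <= (Pmax n + Kmax n) * (Pmax n + Kmax n)) by nra. nra. }
  unfold Lyap.
  assert (Eq1 : forall (X Y : nat -> nat -> R), sumR (nodes n) (fun a => sumR (nodes n) (fun b => / 2 * X a b - / 2 * Y a b))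
     = / 2 * sumR (nodes n) (fun a => sumR (nodes n) (fun b => X a b)) - / 2 * sumR (nodes n) (fun a => sumR (nodes n) (fun b => Y a b))).
  { intros X Y. rewrite <- !sumR_scal, <- sumR_minus. apply sumR_ext; intros.
    rewrite <- !sumR_scal, <- sumR_minus. reflexivity. }
  assert (Eq2 : forall (X : nat -> nat -> R) c, sumR (nodes n) (fun a => sumR (nodes n) (fun b => X a b + c))
     = sumR (nodes n) (fun a => sumR (nodes n) (fun b => X a b)) + INR (nN n) * (INR (nN n) * c)).
  { intros X c. rewrite <- length_nodes, <- sumR_const, <- sumR_plus. apply sumR_ext; intros.
    rewrite sumR_plus, sumR_const. reflexivity. }
  rewrite Eq1, Eq2 in H1.
  rewrite sumR_minus, sumR_plus, sumR_const, !sumR_scal in H2.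
  unfold Bconst. fold c2. unfold Lnum.
  assert (INR (nN n) * (INR (nN n) * c1) = INR (nN n) ^ 2 * (3 / 2 * INR (dmax n) ^ 2 * mumax n ^ 2 + R_max n ^ 2))
    by (unfold c1; ring).
  assert (INR (length (links n)) * c2 = INR (length (links n)) / 2 * (Pmax n + Kmax n) ^ 2) by (unfold c2; field). lra.
Qed.

Lemma fold_Rmax_ub {A} (g : A -> R) l x : In x l -> g x <= fold_right Rmax 0 (map g l).
Proof. induction l; simpl; [intros []|]. intros [->|H].
  apply Rmax_l. eapply Rle_trans; [apply IHl; auto|apply Rmax_r]. Qed.
Lemma fold_Rmax_lub {A} (g : A -> R) l c : 0 <= c -> (forall x, In x l -> g x <= c) ->
  fold_right Rmax 0 (map g l) <= c.
Proof. induction l; simpl; intros H0 H; auto. apply Rmax_lub; auto. Qed.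
Lemma fold_Rmax_nonneg {A} (g : A -> R) l : 0 <= fold_right Rmax 0 (map g l).
Proof. induction l; simpl; [lra|]. eapply Rle_trans; [apply IHl|apply Rmax_r]. Qed.

Lemma links_nodes n l : valid_net n -> In l (links n) -> (fst l < nN n)%nat /\ (snd l < nN n)%nat.
Proof. intros Hn Hl. destruct l as [c d]. destruct Hn as [_ [Hv _]].
  destruct (Hv c d Hl) as [? [? _]]; simpl; auto. Qed.

Lemma Wl_bounds n beta V tr t l : valid_net n -> is_beta n beta -> 0 < V ->
  follows_algorithm n beta V tr -> In l (links n) ->
  0 <= Wl n tr l t <= V * beta.
Proof. intros Hn Hb HV Halg Hl. split. apply fold_Rmax_nonneg.
  pose proof (beta_nonneg n beta Hn Hb). apply fold_Rmax_lub. apply Rmult_le_pos; lra.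
  intros b Hbn. apply in_nodes in Hbn. destruct (links_nodes n l Hn Hl).
  pose proof (Q_bounds n beta V tr Hn Hb HV Halg t (fst l) b ltac:(auto) Hbn).
  pose proof (Q_bounds n beta V tr Hn Hb HV Halg t (snd l) b ltac:(auto) Hbn).
  unfold Wb. apply Rmax_lub. lra. apply Rmult_le_pos; lra. Qed.

Lemma alg_routing n beta V tr t l : valid_net n -> follows_algorithm n beta V tr -> In l (links n) ->
  mu n l (P tr l t) * Wl n tr l t <=
  sumR (nodes n) (fun b => mub tr l b t * (Q tr (fst l) b t - Q tr (snd l) b t)).
Proof.
  intros Hn Halg Hl. pose proof Halg as [_ [_ Hal]].
  destruct (Hal t) as [_ [_ [[Hadm _] Hrout]]]. destruct (Hadm l Hl) as [HP _].
  pose proof Hn as Hn'. destruct Hn' as [_ [_ [_ [_ [_ [_ [_ [_ [Hmu _]]]]]]]]].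
  destruct (Hmu l _ Hl HP) as [Hm1 _].
  destruct (Hrout l Hl) as [bs [Hbs [Hmax [Hpos Hneg]]]].
  assert (HW : Wl n tr l t <= Wb n tr l bs t).
  { apply fold_Rmax_lub. apply Rmax_ge. intros b Hb; apply Hmax, in_nodes; auto. }
  pose proof (gamma_ge n Hn) as [Hg1 [Hg2 Hg3]].
  destruct (Rlt_dec 0 (Wb n tr l bs t)) as [Hw|Hw].
  - destruct (Hpos Hw) as [E1 E2].
    rewrite (sumR_ext _ _ (fun b => if Nat.eqb bs b then
       mu n l (P tr l t) * (Q tr (fst l) bs t - Q tr (snd l) bs t) else 0)).
    rewrite sumR_single by (auto using nodup_nodes; apply in_nodes; auto).
    pose proof Hw as Hw'. apply Rmax_pos_inv in Hw'. unfold Wb in HW, Hw.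
    unfold Rmax in HW. destruct (Rle_dec _ 0); [lra|].
    apply Rmult_le_compat_l; lra.
    intros b Hb. apply in_nodes in Hb. destruct (Nat.eqb bs b) eqn:Eb.
    apply Nat.eqb_eq in Eb; subst. rewrite E1; auto.
    apply Nat.eqb_neq in Eb. rewrite E2; auto. lra.
  - rewrite (sumR_ext _ _ (fun _ => 0)). rewrite sumR_const.
    assert (Wl n tr l t <= 0) by lra.
    assert (mu n l (P tr l t) * Wl n tr l t <= 0).
    { replace 0 with (mu n l (P tr l t) * 0) by ring. apply Rmult_le_compat_l; lra. }
    lra.
    intros b Hb. apply in_nodes in Hb. rewrite (Hneg ltac:(lra) b Hb). lra.
Qed.

Lemma alg_power n beta V tr t (Pp : nat * nat -> R) : valid_net n -> is_beta n beta -> 0 < V ->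
  follows_algorithm n beta V tr -> (forall l, In l (links n) -> 0 <= Pp l <= Pmax n) ->
  sumR (links n) (fun l => mu n l (Pp l) * Wl n tr l t + (E tr l t - theta n beta V) * Pp l) <=
  P_objective n tr beta V t (fun l => P tr l t).
Proof.
  intros Hn Hb HV Halg HPp. pose proof Halg as [_ [_ Hal]].
  destruct (Hal t) as [_ [_ [[Hadm Hopt] _]]].
  set (Pt := fun l => if Rle_dec (Pp l) (E tr l t) then Pp l else 0).
  assert (HE : forall l, In l (links n) -> 0 <= E tr l t).
  { intros l Hl. destruct (Hadm l Hl) as [[? _] ?]. lra. }
  assert (Hadm' : P_admissible n tr t Pt).
  { intros l Hl. unfold Pt. destruct (Rle_dec (Pp l) (E tr l t)).
    specialize (HPp l Hl); lra. specialize (HE l Hl). pose proof (proj1 (proj2 (proj2 (proj2 Hn)))). lra. }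
  eapply Rle_trans; [|apply (Hopt Pt Hadm')]. unfold P_objective.
  apply sumR_le. intros l Hl. unfold Pt. destruct (Rle_dec (Pp l) (E tr l t)); [lra|].
  pose proof Hn as Hn'. destruct Hn' as [_ [_ [_ [_ [_ [Hd [_ [_ [Hmu _]]]]]]]]].
  destruct (Hmu l (Pp l) Hl (HPp l Hl)) as [Hm1 [_ Hm3]].
  destruct (Hmu l 0 Hl ltac:(pose proof (HPp l Hl); lra)) as [Hz1 [_ Hz3]].
  assert (Hz : mu n l 0 = 0) by lra. rewrite Hz.
  destruct (Wl_bounds n beta V tr t l Hn Hb HV Halg Hl) as [HW1 HW2].
  pose proof (beta_nonneg n beta Hn Hb).
  destruct (HPp l Hl) as [Hp1 Hp2].
  set (w := Wl n tr l t) in *. set (p := Pp l) in *. set (mm := mu n l p) in *.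
  assert (mm * w <= delta n * p * w) by (apply Rmult_le_compat_r; lra).
  assert (delta n * p * w <= delta n * p * (V * beta)) by (apply Rmult_le_compat_l; nra).
  unfold theta. nra.
Qed.

Lemma cmp_routing n tr tr2 t s l : valid_net n -> feasible_policy n tr2 -> In l (links n) ->
  sumR (nodes n) (fun b => mub tr2 l b s * (Q tr (fst l) b t - Q tr (snd l) b t)) <=
  mu n l (P tr2 l s) * (Wl n tr l t + gamma n).
Proof.
  intros Hn [_ [_ [Hf _]]] Hl. destruct (Hf l s Hl) as [_ [_ [_ [Hm Hsum]]]].
  rewrite <- Hsum, Rmult_comm, <- sumR_scal. apply sumR_le. intros b Hb.
  pose proof (Hm b ltac:(apply in_nodes; auto)).
  assert (Q tr (fst l) b t - Q tr (snd l) b t <= Wl n tr l t + gamma n).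
  { pose proof (fold_Rmax_ub (fun b => Wb n tr l b t) (nodes n) b Hb). simpl in H0.
    unfold Wb in H0. unfold Wl, Wb. pose proof (Rmax_ge (Q tr (fst l) b t - Q tr (snd l) b t - gamma n)). lra. }
  rewrite Rmult_comm. apply Rmult_le_compat_r; lra.
Qed.

Definition dsum n (f : nat -> nat -> R) : R := sumR (nodes n) (fun a => sumR (nodes n) (fun b => f a b)).

Lemma dsum_ext n f g : (forall a b, (a < nN n)%nat -> (b < nN n)%nat -> f a b = g a b) -> dsum n f = dsum n g.
Proof. intros H. unfold dsum. apply sumR_ext; intros a Ha; apply sumR_ext; intros b Hb.
  apply in_nodes in Ha, Hb; auto. Qed.
Lemma dsum_le n f g : (forall a b, (a < nN n)%nat -> (b < nN n)%nat -> f a b <= g a b) -> dsum n f <= dsum n g.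
Proof. intros H. unfold dsum. apply sumR_le; intros a Ha; apply sumR_le; intros b Hb.
  apply in_nodes in Ha, Hb; auto. Qed.
Lemma dsum_plus n f g : dsum n (fun a b => f a b + g a b) = dsum n f + dsum n g.
Proof. unfold dsum. rewrite <- sumR_plus. apply sumR_ext; intros; apply sumR_plus. Qed.
Lemma dsum_minus n f g : dsum n (fun a b => f a b - g a b) = dsum n f - dsum n g.
Proof. unfold dsum. rewrite <- sumR_minus. apply sumR_ext; intros; apply sumR_minus. Qed.
Lemma dsum_scal n c f : dsum n (fun a b => c * f a b) = c * dsum n f.
Proof. unfold dsum. rewrite <- sumR_scal. apply sumR_ext; intros; apply sumR_scal. Qed.
Lemma avg_dsum n m f : avg m (fun s => dsum n (fun a b => f a b s)) = dsum n (fun a b => avg m (f a b)).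
Proof. unfold dsum. rewrite avg_sum. apply sumR_ext; intros. rewrite avg_sum. reflexivity. Qed.
Lemma avg_ext m f g : (forall s, (s < m)%nat -> f s = g s) -> avg m f = avg m g.
Proof. intros H. unfold avg. f_equal. apply sumR_ext. intros x Hx. apply in_seq in Hx. apply H; lia. Qed.
Lemma avg_ge_const m f c : (0 < m)%nat -> (forall s, (s < m)%nat -> f s <= c) -> avg m f <= c.
Proof. intros Hm H. rewrite <- (avg_const m c Hm). apply avg_le; auto. Qed.
Lemma avg_between m f lo hi : (0 < m)%nat -> (forall s, (s < m)%nat -> lo <= f s <= hi) -> lo <= avg m f <= hi.
Proof. intros Hm H. split. rewrite <- (avg_const m lo Hm). apply avg_le; auto; apply H.
  apply avg_ge_const; auto; apply H. Qed.

Lemma feas_pbar n tr' m l : valid_net n -> feasible_policy n tr' -> (0 < m)%nat -> In l (links n) ->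
  0 <= avg m (fun s => P tr' l s) <= Kgen n l.
Proof.
  intros Hn Hf Hm Hl. pose proof Hf as [Hkd [_ [Hc _]]].
  destruct Hn as [_ [_ [_ [_ [_ [_ [_ [Hkg _]]]]]]]]. destruct (Hkg l Hl) as [Hk1 Hk2].
  assert (Hp0 : 0 <= avg m (fun s => P tr' l s) <= Pmax n).
  { apply avg_between; auto. intros s _. destruct (Hc l s Hl) as [_ [HP _]]. exact HP. }
  split; [apply Hp0|].
  destruct (Hkd l Hl) as [HE0 HES].
  assert (Ht : sumR (seq 0 m) (fun s => Sk tr' l s * Kgen n l - P tr' l s) = E tr' l m).
  { apply telescope; auto. intros s; rewrite HES; lra. }
  assert (HEm : 0 <= E tr' l m). { destruct (Hc l m Hl) as [_ [HP [HPE _]]]. lra. }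
  assert (Ha : 0 <= avg m (fun s => Sk tr' l s * Kgen n l - P tr' l s)).
  { unfold avg. rewrite Ht. apply Rmult_le_pos; auto. left; apply Rinv_0_lt_compat, lt_0_INR; lia. }
  rewrite avg_minus in Ha.
  assert (avg m (fun s => Sk tr' l s * Kgen n l) <= Kgen n l).
  { apply avg_ge_const; auto. intros s _. destruct (Hc l s Hl) as [[-> | ->] _]; lra. }
  change (avg m (fun s => P tr' l s)) with (avg m (P tr' l)). lra.
Qed.

Lemma feas_queue n tr' m a b : feasible_policy n tr' -> (a < nN n)%nat -> (b < nN n)%nat -> a <> b ->
  avg m (fun s => Radm tr' a b s + (inflow n tr' a b s - outflow n tr' a b s)) = / INR m * Q tr' a b m.
Proof.
  intros [_ [Hqd _]] Ha Hb Hne. destruct (Hqd a b Ha Hb) as [H0 Hdyn]. unfold avg. f_equal.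
  apply telescope; auto. intros s. rewrite (proj2 (Hdyn s) Hne). lra.
Qed.

Lemma slot_bound n beta V tr tr' m t : valid_net n -> is_beta n beta -> 0 < V ->
  follows_algorithm n beta V tr -> feasible_policy n tr' -> (0 < m)%nat ->
  Lyap n beta V tr (S t) - Lyap n beta V tr t - V * dsum n (fun a b => U n a b (Radm tr a b t)) <=
  Bconst n + INR (Lnum n) * (gamma n * mumax n) + (V * beta + gamma n) * (/ INR m * total_queue n tr' m)
  - V * dsum n (fun a b => U n a b (avg m (fun s => Radm tr' a b s))).
Proof.
  intros Hn Hb HV Halg Hf Hm.
  pose proof (drift_bound n beta V tr t Hn Hb HV Halg) as Hd.
  change (sumR (nodes n) (fun a => sumR (nodes n) (fun b => Q tr a b t * (Radm tr a b t + inflow n tr a b t - outflow n tr a b t))))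
    with (dsum n (fun a b => Q tr a b t * (Radm tr a b t + inflow n tr a b t - outflow n tr a b t))) in Hd.
  assert (Esplit : dsum n (fun a b => Q tr a b t * (Radm tr a b t + inflow n tr a b t - outflow n tr a b t)) =
     dsum n (fun a b => Q tr a b t * Radm tr a b t) + dsum n (fun a b => Q tr a b t * (inflow n tr a b t - outflow n tr a b t))).
  { rewrite <- dsum_plus. apply dsum_ext; intros; ring. }
  assert (Eflow : dsum n (fun a b => Q tr a b t * (inflow n tr a b t - outflow n tr a b t)) =
     - sumR (links n) (fun l => sumR (nodes n) (fun b => mub tr l b t * (Q tr (fst l) b t - Q tr (snd l) b t)))).
  { unfold dsum. apply (flow_identity n tr (fun a b => Q tr a b t) t Hn). }
  assert (S3 : sumR (links n) (fun l => mu n l (P tr l t) * Wl n tr l t) <=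
     sumR (links n) (fun l => sumR (nodes n) (fun b => mub tr l b t * (Q tr (fst l) b t - Q tr (snd l) b t)))).
  { apply sumR_le. intros l Hl. apply alg_routing with (beta := beta) (V := V); auto. }
  set (pbar := fun l => avg m (fun s => P tr' l s)).
  set (th := theta n beta V).
  assert (S4 : sumR (links n) (fun l => (E tr l t - th) * (Sk tr l t * Kgen n l - P tr l t)) <=
     sumR (links n) (fun l => (E tr l t - th) * pbar l) - sumR (links n) (fun l => (E tr l t - th) * P tr l t)).
  { rewrite <- sumR_minus. apply sumR_le. intros l Hl.
    pose proof (feas_pbar n tr' m l Hn Hf Hm Hl) as Hp. fold (pbar l) in Hp.
    pose proof Halg as [_ [_ Hal]]. destruct (Hal t) as [Hgen _]. destruct (Hgen l Hl) as [G1 G2].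
    destruct (Rlt_dec (E tr l t) th) as [Hlt|Hge].
    - rewrite (G1 Hlt). assert ((E tr l t - th) * Kgen n l <= (E tr l t - th) * pbar l).
      { apply Rmult_le_compat_neg_l; lra. } lra.
    - rewrite (G2 ltac:(unfold th in Hge; lra)). assert (0 <= (E tr l t - th) * pbar l).
      { apply Rmult_le_pos; lra. } lra. }
  assert (S5 : P_objective n tr beta V t (fun l => P tr l t) =
     sumR (links n) (fun l => mu n l (P tr l t) * Wl n tr l t) + sumR (links n) (fun l => (E tr l t - th) * P tr l t)).
  { unfold P_objective. apply sumR_plus. }
  set (rbar := fun a b => avg m (fun s => Radm tr' a b s)).
  assert (S6 : dsum n (fun a b => Q tr a b t * Radm tr a b t) - V * dsum n (fun a b => U n a b (Radm tr a b t)) <=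
     dsum n (fun a b => Q tr a b t * rbar a b) - V * dsum n (fun a b => U n a b (rbar a b))).
  { rewrite <- !dsum_scal, <- !dsum_minus. apply dsum_le. intros a b Ha Hb'.
    pose proof Halg as [_ [_ Hal]]. destruct (Hal t) as [_ [Hadm _]].
    destruct (Hadm a b Ha Hb') as [_ Hopt].
    assert (Hr : 0 <= rbar a b <= R_max n).
    { apply avg_between; auto. intros s _. pose proof Hf as [_ [_ [_ [Hc _]]]].
      apply (Hc a b s Ha Hb'). }
    specialize (Hopt (rbar a b) Hr). lra. }
  set (c := INR (Lnum n) * (gamma n * mumax n)).
  set (Hs := fun s => sumR (links n) (fun l => (E tr l t - th) * P tr' l s)
      - dsum n (fun a b => Q tr a b t * (inflow n tr' a b s - outflow n tr' a b s)) - c).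
  assert (S7 : forall s, (s < m)%nat -> Hs s <= P_objective n tr beta V t (fun l => P tr l t)).
  { intros s _. pose proof Hf as [_ [_ [Hc _]]].
    eapply Rle_trans; [|apply (alg_power n beta V tr t (fun l => P tr' l s) Hn Hb HV Halg)].
    2:{ intros l Hl. apply (Hc l s Hl). }
    unfold Hs, dsum. rewrite (flow_identity n tr' (fun a b => Q tr a b t) s Hn).
    unfold c, Lnum.
    assert (K : sumR (links n) (fun l => (E tr l t - th) * P tr' l s +
        sumR (nodes n) (fun b => mub tr' l b s * (Q tr (fst l) b t - Q tr (snd l) b t)) - gamma n * mumax n)
        <= sumR (links n) (fun l => mu n l (P tr' l s) * Wl n tr l t + (E tr l t - theta n beta V) * P tr' l s)).
    { apply sumR_le. intros l Hl.
      pose proof (cmp_routing n tr tr' t s l Hn Hf Hl).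
      destruct (Hc l s Hl) as [_ [HP _]].
      pose proof Hn as Hn'. destruct Hn' as [_ [_ [_ [_ [_ [_ [_ [_ [Hmu _]]]]]]]]].
      destruct (Hmu l _ Hl HP) as [Hm1 [Hm2 _]].
      pose proof (gamma_ge n Hn) as [Hg1 [Hg2 Hg3]].
      assert (mu n l (P tr' l s) * gamma n <= mumax n * gamma n) by (apply Rmult_le_compat_r; lra).
      fold th. lra. }
    rewrite sumR_minus, sumR_plus, sumR_const in K. lra. }
  assert (S7' : avg m Hs <= P_objective n tr beta V t (fun l => P tr l t)).
  { apply avg_ge_const; auto. }
  assert (EHs : avg m Hs = sumR (links n) (fun l => (E tr l t - th) * pbar l)
      - dsum n (fun a b => Q tr a b t * avg m (fun s => inflow n tr' a b s - outflow n tr' a b s)) - c).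
  { unfold Hs. rewrite !avg_minus, avg_const by auto. f_equal. f_equal.
    - rewrite avg_sum. apply sumR_ext; intros. rewrite avg_scal. reflexivity.
    - rewrite (avg_dsum n m (fun a b s => Q tr a b t * (inflow n tr' a b s - outflow n tr' a b s))).
      apply dsum_ext; intros. rewrite avg_scal. reflexivity. }
  assert (S8 : dsum n (fun a b => Q tr a b t * rbar a b) +
      dsum n (fun a b => Q tr a b t * avg m (fun s => inflow n tr' a b s - outflow n tr' a b s)) <=
      (V * beta + gamma n) * (/ INR m * total_queue n tr' m)).
  { rewrite <- dsum_plus. change (total_queue n tr' m) with (dsum n (fun a b => Q tr' a b m)).
    rewrite <- !dsum_scal. apply dsum_le. intros a b Ha Hb'.
    pose proof (Q_bounds n beta V tr Hn Hb HV Halg t a b Ha Hb') as HQ.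
    pose proof Hf as [_ [Hqd [_ [Hc _]]]]. destruct (Hc a b m Ha Hb') as [_ HQ'].
    assert (Hmi : 0 < / INR m) by (apply Rinv_0_lt_compat, lt_0_INR; lia).
    destruct (Nat.eq_dec a b) as [Heq|Hne].
    - pose proof Halg as [_ [Hqa _]]. destruct (Hqa a b Ha Hb') as [_ Hdyn].
      rewrite (proj1 (Hdyn t) Heq). pose proof (beta_nonneg n beta Hn Hb).
      pose proof (gamma_ge n Hn) as [Hg1 [Hg2 Hg3]].
      assert (0 <= V * beta) by (apply Rmult_le_pos; lra).
      assert (0 <= / INR m * Q tr' a b m) by (apply Rmult_le_pos; lra).
      assert (0 <= (V * beta + gamma n) * (/ INR m * Q tr' a b m)) by (apply Rmult_le_pos; lra).
      lra.
    - unfold rbar. rewrite <- Rmult_plus_distr_l, <- avg_plus.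
      rewrite (feas_queue n tr' m a b Hf Ha Hb' Hne).
      apply Rmult_le_compat_r; [apply Rmult_le_pos; lra|lra]. }
  rewrite Esplit, Eflow in Hd. rewrite S5 in S7'. rewrite EHs in S7'.
  fold th in Hd. fold c. change (dsum n (fun a b => U n a b (avg m (fun s => Radm tr' a b s)))) with (dsum n (fun a b => U n a b (rbar a b))). lra.
Qed.

Lemma Lyap_nonneg n beta V tr t : 0 <= Lyap n beta V tr t.
Proof. unfold Lyap. assert (0 <= / 2) by lra.
  assert (0 <= sumR (nodes n) (fun a => sumR (nodes n) (fun b => Q tr a b t ^ 2))).
  { apply sumR_nonneg; intros; apply sumR_nonneg; intros; apply pow2_ge_0. }
  assert (0 <= sumR (links n) (fun l => (E tr l t - theta n beta V) ^ 2)).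
  { apply sumR_nonneg; intros; apply pow2_ge_0. }
  nra. Qed.

Lemma sum_slot n beta V tr tr' m tau : valid_net n -> is_beta n beta -> 0 < V ->
  follows_algorithm n beta V tr -> feasible_policy n tr' -> (0 < m)%nat ->
  Lyap n beta V tr tau - Lyap n beta V tr 0 -
  V * sumR (seq 0 tau) (fun t => dsum n (fun a b => U n a b (Radm tr a b t))) <=
  INR tau * (Bconst n + INR (Lnum n) * (gamma n * mumax n) + (V * beta + gamma n) * (/ INR m * total_queue n tr' m)
  - V * dsum n (fun a b => U n a b (avg m (fun s => Radm tr' a b s)))).
Proof.
  intros Hn Hb HV Halg Hf Hm.
  assert (Ht : sumR (seq 0 tau) (fun t => Lyap n beta V tr (S t) - Lyap n beta V tr t) =
     Lyap n beta V tr tau - Lyap n beta V tr 0).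
  { apply (telescope (fun t => Lyap n beta V tr t - Lyap n beta V tr 0)); intros; lra. }
  rewrite <- Ht, <- sumR_scal, <- sumR_minus.
  replace (INR tau) with (INR (length (seq 0 tau))) by (rewrite length_seq; auto).
  rewrite <- sumR_const. apply sumR_le. intros t _.
  apply slot_bound; auto.
Qed.

Lemma util_lower n beta V tr tau : valid_net n -> follows_algorithm n beta V tr -> (0 < tau)%nat ->
  avg tau (fun t => dsum n (fun a b => U n a b (Radm tr a b t))) <=
  total_utility n (fun a b => avg_rate tr a b tau).
Proof.
  intros Hn Halg Htau. rewrite avg_dsum. unfold total_utility. fold (dsum n (fun a b => U n a b (avg_rate tr a b tau))).
  apply dsum_le. intros a b Ha Hb. unfold avg, avg_rate.
  destruct Hn as [_ [_ [_ [_ [_ [_ [_ [_ [_ HU]]]]]]]]]. destruct (HU a b Ha Hb) as [Hc _].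
  apply (jensen (U n a b) (fun t => Radm tr a b t) tau Hc); auto.
  intros s. pose proof Halg as [_ [_ Hal]]. destruct (Hal s) as [_ [Hadm _]].
  apply (Hadm a b Ha Hb).
Qed.

Lemma Lnum_bound n : valid_net n -> INR (Lnum n) <= INR (nN n) ^ 2 * INR (dmax n).
Proof.
  intros Hn. unfold Lnum.
  rewrite <- (Rmult_1_r (INR (length (links n)))), <- sumR_const.
  rewrite <- (sumR_partition fst (links n) (nodes n) (fun _ => 1)).
  2: apply nodup_nodes.
  2: { intros l Hl. apply in_nodes. apply (links_nodes n l Hn Hl). }
  eapply Rle_trans.
  { apply (sumR_le _ _ (fun _ => INR (dmax n))). intros a Ha. apply in_nodes in Ha.
    rewrite sumR_const, Rmult_1_r. apply le_INR. apply (outdeg_le n a Ha). }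
  rewrite sumR_const, length_nodes.
  assert (INR (nN n) <= INR (nN n) ^ 2).
  { destruct (nN n) as [|k]. simpl; lra. assert (1 <= INR (S k)) by (apply (le_INR 1); lia). nra. }
  pose proof (pos_INR (dmax n)). nra.
Qed.

Lemma sum_INR_seq t : sumR (seq 0 t) (fun s => INR s) = INR t * (INR t - 1) / 2.
Proof. induction t. unfold sumR; simpl; lra. rewrite sumR_seqS, IHt, S_INR. lra. Qed.

Lemma small_queue n tr' eta : feasible_policy n tr' -> 0 < eta ->
  forall K, exists m, (K <= m)%nat /\ (0 < m)%nat /\ total_queue n tr' m <= eta * INR m.
Proof.
  intros Hf Heta K. apply NNPP. intros Hno.
  assert (Hbig : forall m, (S K <= m)%nat -> eta * INR m < total_queue n tr' m).
  { intros m Hm. apply Rnot_le_lt. intros Hle. apply Hno. exists m. repeat split; auto; lia. }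
  pose proof Hf as [_ [_ [_ [Hc Hst]]]].
  assert (Htq0 : forall t, 0 <= total_queue n tr' t).
  { intros t. apply sumR_nonneg; intros a Ha; apply sumR_nonneg; intros b Hb.
    apply in_nodes in Ha, Hb. apply (Hc a b t Ha Hb). }
  assert (Hg : forall t, eta * INR t - eta * INR (S K) <= total_queue n tr' t).
  { intros t. destruct (le_lt_dec (S K) t) as [Hle|Hlt].
    - specialize (Hbig t Hle). pose proof (pos_INR (S K)). nra.
    - assert (INR t < INR (S K)) by (apply lt_INR; auto). specialize (Htq0 t). nra. }
  destruct Hst as [Ms [Ts Hst]].
  destruct (INR_unbounded (2 * Rabs Ms / eta + 2 * INR (S K) + 1)) as [t0 Ht0].
  set (t := Nat.max t0 (Nat.max Ts 1)).
  assert (Htt : (Ts <= t)%nat /\ (0 < t)%nat /\ (t0 <= t)%nat) by (unfold t; lia).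
  destruct Htt as [H1 [H2 H3]].
  specialize (Hst t H1 H2).
  assert (Hsum : sumR (seq 0 t) (fun s => eta * INR s - eta * INR (S K)) <= sumR (seq 0 t) (fun s => total_queue n tr' s))
    by (apply sumR_le; intros; apply Hg).
  rewrite sumR_minus, sumR_scal, sum_INR_seq, sumR_const, length_seq in Hsum.
  assert (Ht : INR t0 <= INR t) by (apply le_INR; auto).
  assert (Htp : 0 < INR t) by (apply lt_0_INR; auto).
  assert (Hx : / INR t * (eta * (INR t * (INR t - 1) / 2) - INR t * (eta * INR (S K))) =
     eta * ((INR t - 1) / 2 - INR (S K))) by (field; lra).
  assert (Hy : / INR t * (eta * (INR t * (INR t - 1) / 2) - INR t * (eta * INR (S K))) <=
     / INR t * sumR (seq 0 t) (fun s => total_queue n tr' s)).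
  { apply Rmult_le_compat_l; [left; apply Rinv_0_lt_compat; auto|auto]. }
  assert (Hz : Rabs Ms < eta * ((INR t - 1) / 2 - INR (S K))).
  { assert (2 * Rabs Ms / eta < INR t - 1 - 2 * INR (S K)) by lra.
    assert (2 * Rabs Ms < eta * (INR t - 1 - 2 * INR (S K))).
    { apply (Rmult_lt_compat_l eta) in H; auto.
      replace (eta * (2 * Rabs Ms / eta)) with (2 * Rabs Ms) in H by (field; lra). lra. }
    lra. }
  pose proof (Rle_abs Ms). lra.
Qed.

Lemma util_conv (f : R -> R) (u : nat -> R) r eta : concave_on_nonneg f -> nondecr_on_nonneg f ->
  (forall k, 0 <= u k) -> Un_cv u r -> 0 < eta ->
  exists K, forall k, (K <= k)%nat -> f r - eta <= f (u k).
Proof.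
  intros Hc Hm Hu Hcv Heta.
  assert (Hr : 0 <= r).
  { destruct (Rle_dec 0 r) as [|Hn]; auto. exfalso.
    destruct (Hcv (- r) ltac:(lra)) as [K HK]. specialize (HK K (le_n K)).
    unfold R_dist in HK. apply Rabs_def2 in HK. specialize (Hu K). lra. }
  destruct (Req_dec r 0) as [->|Hr0].
  { exists 0%nat. intros k _. pose proof (Hm 0 (u k) ltac:(lra) (Hu k)). lra. }
  assert (Hrp : 0 < r) by lra.
  assert (HD : 0 <= f r - f 0) by (pose proof (Hm 0 r ltac:(lra) Hr); lra).
  set (D := f r - f 0) in *.
  set (dl := eta * r / (D + 1)).
  assert (Hdl : 0 < dl) by (unfold dl; apply Rdiv_lt_0_compat; [apply Rmult_lt_0_compat|]; lra).
  destruct (Hcv dl Hdl) as [K HK]. exists K. intros k Hk. specialize (HK k Hk).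
  unfold R_dist in HK. apply Rabs_def2 in HK. destruct HK as [HK1 HK2].
  destruct (Rle_dec r (u k)) as [Hle|Hlt].
  - pose proof (Hm r (u k) Hr Hle). lra.
  - set (x := u k) in *. pose proof (Hu k) as Hx. fold x in Hx.
    assert (Hl : 0 <= x / r <= 1).
    { split. apply Rdiv_le_0_compat; lra.
      apply (Rmult_le_reg_r r); [lra|]. unfold Rdiv; rewrite Rmult_assoc, Rinv_l; lra. }
    pose proof (Hc r 0 (x / r) Hr ltac:(lra) Hl) as Hcc.
    replace (x / r * r + (1 - x / r) * 0) with x in Hcc by (field; lra).
    assert (H1 : f r - f x <= (r - x) / r * D).
    { replace ((r - x) / r * D) with ((1 - x / r) * (f r - f 0)) by (unfold D; field; lra). lra. }
    assert (H2 : (r - x) / r * D <= dl / r * D).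
    { apply Rmult_le_compat_r; auto. unfold Rdiv. apply Rmult_le_compat_r.
      left; apply Rinv_0_lt_compat; lra. lra. }
    assert (H3 : dl / r * D = eta * (D / (D + 1))) by (unfold dl; field; lra).
    assert (H4 : D / (D + 1) <= 1).
    { apply (Rmult_le_reg_r (D + 1)); [lra|]. unfold Rdiv; rewrite Rmult_assoc, Rinv_l; lra. }
    assert (eta * (D / (D + 1)) <= eta) by (rewrite <- (Rmult_1_r eta) at 2; apply Rmult_le_compat_l; lra).
    lra.
Qed.

Lemma eventually_sum (l : list nat) (F : nat -> nat -> R) (G : nat -> R) eta :
  (forall x, In x l -> exists K, forall k, (K <= k)%nat -> G x - eta <= F k x) ->
  exists K, forall k, (K <= k)%nat -> sumR l G - INR (length l) * eta <= sumR l (fun x => F k x).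
Proof.
  induction l as [|x l IH]; intros H.
  - exists 0%nat. intros. unfold sumR; simpl. lra.
  - destruct (H x (or_introl eq_refl)) as [K1 HK1].
    destruct IH as [K2 HK2]. { intros y Hy. apply H; right; auto. }
    exists (Nat.max K1 K2). intros k Hk. rewrite !sumR_cons. simpl length. rewrite S_INR.
    specialize (HK1 k ltac:(lia)). specialize (HK2 k ltac:(lia)). lra.
Qed.

Lemma div_le a b c : 0 < b -> a <= c * b -> a / b <= c.
Proof. intros Hb H. apply (Rmult_le_reg_r b); auto. unfold Rdiv; rewrite Rmult_assoc, Rinv_l; lra. Qed.

Theorem theorem3 (n : Net) (beta V : R) (tr : Traj)
    (Hn : valid_net n) (Hbeta : is_beta n beta) (HV : 0 < V)
    (Halg : follows_algorithm n beta V tr)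
    (tr' : Traj) (rstar : nat -> nat -> R)
    (Hfeas : feasible_policy n tr')
    (Hr : forall a b, (a < nN n)%nat -> (b < nN n)%nat ->
         Un_cv (fun tau => avg_rate tr' a b (S tau)) (rstar a b)) :
  forall eps, 0 < eps ->
    exists T, forall tau, (T <= tau)%nat -> (0 < tau)%nat ->
      total_utility n (fun a b => avg_rate tr a b tau)
      >= total_utility n rstar - Btilde n / V - eps.
Proof.
  intros eps Heps.
  pose proof (beta_nonneg n beta Hn Hbeta) as Hb0.
  pose proof (gamma_ge n Hn) as [Hg1 [Hg2 Hg3]].
  assert (HR0 : 0 <= R_max n) by (destruct Hn as [_ [_ [_ [_ [_ [_ [? _]]]]]]]; auto).
  assert (Hmu0 : 0 <= mumax n) by (destruct Hn as [_ [_ [_ [_ [? _]]]]]; auto).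
  set (NN := INR (nN n)).
  assert (HNN : 0 <= NN) by apply pos_INR.
  set (M := V * beta + gamma n).
  assert (HM : 0 <= M) by (unfold M; assert (0 <= V * beta) by (apply Rmult_le_pos; lra); lra).
  set (eta := eps / (3 * (NN * NN + 1))).
  assert (Heta : 0 < eta) by (unfold eta; apply Rdiv_lt_0_compat; nra).
  assert (St1 : exists K0, forall k, (K0 <= k)%nat ->
      total_utility n rstar - NN * (NN * eta) <=
      dsum n (fun a b => U n a b (avg_rate tr' a b (S k)))).
  { unfold total_utility, dsum.
    assert (Hin : forall a, In a (nodes n) -> exists K, forall k, (K <= k)%nat ->
        sumR (nodes n) (fun b => U n a b (rstar a b)) - NN * eta <=
        sumR (nodes n) (fun b => U n a b (avg_rate tr' a b (S k)))).
    { intros a Ha. apply in_nodes in Ha. unfold NN; rewrite <- length_nodes.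
      apply (eventually_sum (nodes n) (fun k b => U n a b (avg_rate tr' a b (S k)))
         (fun b => U n a b (rstar a b)) eta).
      intros b Hb. apply in_nodes in Hb.
      pose proof Hn as Hn'. destruct Hn' as [_ [_ [_ [_ [_ [_ [_ [_ [_ HU]]]]]]]]].
      destruct (HU a b Ha Hb) as [Hc Hm].
      apply (util_conv (U n a b) (fun k => avg_rate tr' a b (S k))); auto.
      intros k. unfold avg_rate. apply Rmult_le_pos. left; apply Rinv_0_lt_compat, lt_0_INR; lia.
      apply sumR_nonneg. intros s _. pose proof Hfeas as [_ [_ [_ [Hc' _]]]]. apply (Hc' a b s Ha Hb). }
    destruct (eventually_sum (nodes n) (fun k a => sumR (nodes n) (fun b => U n a b (avg_rate tr' a b (S k))))
       (fun a => sumR (nodes n) (fun b => U n a b (rstar a b))) (NN * eta) Hin) as [K0 HK0].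
    exists K0. intros k Hk. specialize (HK0 k Hk). rewrite length_nodes in HK0. fold NN in HK0. exact HK0. }
  destruct St1 as [K0 HK0].
  set (eta2 := eps * V / (3 * (M + 1))).
  assert (Heta2 : 0 < eta2) by (unfold eta2; apply Rdiv_lt_0_compat; [apply Rmult_lt_0_compat|]; lra).
  destruct (small_queue n tr' eta2 Hfeas Heta2 (S K0)) as [m [Hm1 [Hm2 Hm3]]].
  destruct m as [|k]; [lia|].
  specialize (HK0 k ltac:(lia)).
  set (L0 := Lyap n beta V tr 0).
  pose proof (Lyap_nonneg n beta V tr 0) as HL0. fold L0 in HL0.
  destruct (INR_unbounded (3 * L0 / (V * eps))) as [T0 HT0].
  exists T0. intros tau Htau Htau0.
  pose proof (sum_slot n beta V tr tr' (S k) tau Hn Hbeta HV Halg Hfeas Hm2) as Hs.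
  fold L0 in Hs. pose proof (Lyap_nonneg n beta V tr tau) as HLt.
  pose proof (util_lower n beta V tr tau Hn Halg Htau0) as Hul.
  set (Stau := sumR (seq 0 tau) (fun t => dsum n (fun a b => U n a b (Radm tr a b t)))) in *.
  change (avg tau (fun t => dsum n (fun a b => U n a b (Radm tr a b t)))) with (/ INR tau * Stau) in Hul.
  change (dsum n (fun a b => U n a b (avg (S k) (fun s => Radm tr' a b s)))) with
     (dsum n (fun a b => U n a b (avg_rate tr' a b (S k)))) in Hs.
  set (UU := dsum n (fun a b => U n a b (avg_rate tr' a b (S k)))) in *.
  set (c := INR (Lnum n) * (gamma n * mumax n)) in *.
  set (q := / INR (S k) * total_queue n tr' (S k)) in *.
  fold M in Hs.
  set (Cst := Bconst n + c + M * q - V * UU) in *.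
  assert (Htp : 0 < INR tau) by (apply lt_0_INR; lia).
  assert (A1 : - (L0 / (V * INR tau)) - Cst / V <= / INR tau * Stau).
  { assert (E1 : / INR tau * Stau = / (V * INR tau) * (V * Stau)) by (field; lra).
    assert (E2 : / (V * INR tau) * (- L0 - INR tau * Cst) = - (L0 / (V * INR tau)) - Cst / V) by (field; lra).
    rewrite E1, <- E2. apply Rmult_le_compat_l. left; apply Rinv_0_lt_compat; nra. lra. }
  assert (A2 : L0 / (V * INR tau) <= eps / 3).
  { apply div_le. nra.
    assert (HT : INR T0 <= INR tau) by (apply le_INR; auto).
    assert (3 * L0 / (V * eps) * (V * eps / 3) = L0) by (field; lra).
    assert (3 * L0 / (V * eps) * (V * eps / 3) <= INR tau * (V * eps / 3)).
    { apply Rmult_le_compat_r. apply Rlt_le, Rdiv_lt_0_compat; [apply Rmult_lt_0_compat|]; lra. lra. }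
    lra. }
  assert (Hc : c <= NN ^ 2 * INR (dmax n) * (gamma n * mumax n)).
  { unfold c. pose proof (Lnum_bound n Hn). fold NN in H.
    assert (0 <= gamma n * mumax n) by (apply Rmult_le_pos; lra).
    apply Rmult_le_compat_r; auto. }
  assert (Hq : q <= eta2).
  { unfold q. assert (0 < INR (S k)) by (apply lt_0_INR; lia).
    rewrite Rmult_comm. apply div_le; auto; try lra. }
  assert (A3 : M * q <= eps / 3 * V).
  { assert (M * q <= M * eta2) by (apply Rmult_le_compat_l; auto).
    assert (M * eta2 = eps / 3 * V * (M / (M + 1))) by (unfold eta2; field; lra).
    assert (M / (M + 1) <= 1) by (apply div_le; lra).
    assert (eps / 3 * V * (M / (M + 1)) <= eps / 3 * V * 1).
    { apply Rmult_le_compat_l; [apply Rmult_le_pos; lra|lra]. }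
    lra. }
  assert (A4 : NN * (NN * eta) <= eps / 3).
  { replace (NN * (NN * eta)) with (eps / 3 * (NN * NN / (NN * NN + 1))) by (unfold eta; field; nra).
    assert (NN * NN / (NN * NN + 1) <= 1) by (apply div_le; nra).
    assert (eps / 3 * (NN * NN / (NN * NN + 1)) <= eps / 3 * 1) by (apply Rmult_le_compat_l; lra).
    lra. }
  assert (A5 : Cst / V = (Bconst n + c) / V + M * q / V - UU) by (unfold Cst; field; lra).
  assert (A6 : (Bconst n + c) / V <= Btilde n / V).
  { unfold Rdiv. apply Rmult_le_compat_r. left; apply Rinv_0_lt_compat; lra.
    unfold Btilde. fold NN. lra. }
  assert (A7 : M * q / V <= eps / 3) by (apply div_le; lra).
  lra.
Qed.
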